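(* Let $\lambda=(\lambda_1,\ldots,\lambda_\ell)$ be a partition with $\ell$ positive parts. If $2\leq\ell<n$ and $\lambda_2\geq 2$, then the poset $\mathcal B_\lambda^n$ is not a lattice.
   Context: For $N\geq 1$ and a partition $\nu$ with at most $N$ positive parts, $\mathcal B_\nu^N$ is the set of semistandard Young tableaux of shape $\nu$ (rows weakly increasing, columns strictly increasing) with entries in $\{1,\ldots,N+1\}$, partially ordered by the reflexive transitive closure of $T<F_i(T)$ for $i\in\{1,\ldots,N\}$ with $F_i(T)\neq 0$. Here $F_i$ is the type A crystal lowering operator: in the reading word of $T$ (rows read from bottom to top, each row left to right) keep only letters $i$ and $i+1$, replace each $i$ by '')'' and each $i+1$ by ''('', and match parentheses in the usual way; if there is no unmatched '')'', $F_i(T)=0$; otherwise $F_i(T)$ is obtained by changing the entry $i$ corresponding to the rightmost unmatched '')'' into $i+1$. *)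

(* Defs.v *)
From mathcomp Require Import all_boot.
Set Implicit Arguments. Unset Strict Implicit. Unset Printing Implicit Defensive.

(* A tableau is a list of rows (top row first), each row a list of entries. *)
Definition tableau := seq (seq nat).

Definition is_partition (lam : seq nat) : bool :=
  sorted geq lam && all (fun k => 0 < k) lam.

Definition is_SSYT (N : nat) (lam : seq nat) (t : tableau) : bool :=
  [&& map size t == lam,
      all (fun r => sorted leq r) t,
      all (fun r => all (fun x => (1 <= x) && (x <= N.+1)) r) t &
      all (fun k => all (fun j => nth 0 (nth [::] t k) j < nth 0 (nth [::] t k.+1) j)
                        (iota 0 (size (nth [::] t k.+1))))
          (iota 0 (size t).-1)].

Definition reading_word (t : tableau) : seq nat := flatten (rev t).

(* Position (in the word) of the rightmost unmatched ")" where letters i are ")"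
   and letters i+1 are "(".  [cnt] is the number of currently unmatched "(". *)
Fixpoint rum (i : nat) (w : seq nat) (pos cnt : nat) (acc : option nat) : option nat :=
  match w with
  | [::] => acc
  | x :: w' =>
      if x == i then
        (if cnt is c.+1 then rum i w' pos.+1 c acc else rum i w' pos.+1 0 (Some pos))
      else if x == i.+1 then rum i w' pos.+1 cnt.+1 acc
      else rum i w' pos.+1 cnt acc
  end.

(* Crystal lowering operator F_i; None represents F_i(T) = 0. *)
Definition F_op (i : nat) (t : tableau) : option tableau :=
  let w := reading_word t in
  match rum i w 0 0 None with
  | None => None
  | Some p => Some (rev (reshape (rev (map size t)) (set_nth 0 w p i.+1)))
  end.

Inductive crystal_le (N : nat) (t : tableau) : tableau -> Prop :=
  | crystal_le_refl : crystal_le N t t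
  | crystal_le_step t' t'' i :
      crystal_le N t t' -> 1 <= i <= N -> F_op i t' = Some t'' -> crystal_le N t t''.

Definition B_is_lattice (N : nat) (lam : seq nat) : Prop :=
  forall x y, is_SSYT N lam x -> is_SSYT N lam y ->
    (exists z, [/\ is_SSYT N lam z, crystal_le N x z, crystal_le N y z &
       forall w, is_SSYT N lam w -> crystal_le N x w -> crystal_le N y w -> crystal_le N z w])
    /\
    (exists z, [/\ is_SSYT N lam z, crystal_le N z x, crystal_le N z y &
       forall w, is_SSYT N lam w -> crystal_le N w x -> crystal_le N w y -> crystal_le N w z]).

(* Main.v *)
Require Import Defs.
From mathcomp Require Import all_boot.
From mathcomp Require Import zify.
Set Implicit Arguments. Unset Strict Implicit.

Lemma rum_spec i w pos cnt acc p :
  rum i w pos cnt acc = Some p ->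
  acc = Some p \/ (pos <= p < pos + size w /\ nth 0 w (p - pos) = i).
Proof.
elim: w pos cnt acc => [|x w IH] pos cnt acc /=; first by left.
have H : forall c a, rum i w pos.+1 c a = Some p -> (a = acc \/ (a = Some pos /\ x = i)) ->
  acc = Some p \/ pos <= p < pos + (size w).+1 /\ nth 0 (x :: w) (p - pos) = i.
  move=> c a /IH [ea|[/andP[h1 h2] h3]] ha.
  - case: ha => [<-|[ha hx]]; first by left.
    right; move: ea; rewrite ha => -[<-]; split; first by apply/andP; lia.
    by rewrite subnn.
  - right; split; first by apply/andP; lia.
    have -> : p - pos = (p - pos.+1).+1 by lia.
    by [].
case: eqP => [xi|_].
  case: cnt => [|c] /H; first by apply; right.
  by apply; left.
by case: eqP => _ /H; apply; left.
Qed.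

Lemma sumn_set_nth w p i :
  p < size w -> nth 0 w p = i -> sumn (set_nth 0 w p i.+1) = (sumn w).+1.
Proof.
elim: w p => [|x w IH] [|p] //= hp hn.
  by rewrite hn addSn.
by rewrite IH // addnS.
Qed.

Lemma size_set_nth_lt (w : seq nat) p y : p < size w -> size (set_nth 0 w p y) = size w.
Proof. by move=> h; rewrite size_set_nth; apply/maxn_idPr. Qed.

Definition wt (t : tableau) := sumn (reading_word t).

Lemma F_op_inv i t t' : F_op i t = Some t' ->
  exists p, [/\ rum i (reading_word t) 0 0 None = Some p, p < size (reading_word t),
     nth 0 (reading_word t) p = i &
     reading_word t' = set_nth 0 (reading_word t) p i.+1].
Proof.
rewrite /F_op; case e: rum => [p|] // [<-].
have := rum_spec e => -[//|[/andP[_ hp] hn]].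
rewrite add0n in hp; rewrite subn0 in hn.
exists p; split => //.
rewrite /reading_word revK reshapeKr //.
rewrite size_set_nth_lt // /reading_word size_flatten /shape map_rev.
by rewrite sumn_rev.
Qed.

Lemma F_wt i t t' : F_op i t = Some t' -> wt t' = (wt t).+1.
Proof.
move=> /F_op_inv [p [_ hp hn hw]].
by rewrite /wt hw sumn_set_nth.
Qed.

Lemma F_op_char i t t' p :
  rum i (reading_word t) 0 0 None = Some p ->
  reading_word t' = set_nth 0 (reading_word t) p i.+1 ->
  map size t' = map size t -> F_op i t = Some t'.
Proof.
move=> e hw hs; rewrite /F_op e -hw -hs /reading_word.
by rewrite -map_rev flattenK revK.
Qed.

Lemma cle_wt N x z : crystal_le N x z -> x = z \/ wt x < wt z.
Proof.
elim=> [|t' t'' i _ IH _ /F_wt ->]; first by left.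
by right; case: IH => [->|h] //; apply: ltnW.
Qed.

Lemma cle_step N x z : crystal_le N x z -> wt z = (wt x).+1 ->
  exists i, F_op i x = Some z.
Proof.
case=> [|t' t'' i h _ hF]; first by move=> h; exfalso; lia.
rewrite (F_wt hF) => -[] hw.
case: (cle_wt h) => [->|]; first by exists i.
by rewrite hw ltnn.
Qed.

Lemma rum_skip i u v pos cnt acc :
  all (fun x => (x != i) && (x != i.+1)) u ->
  rum i (u ++ v) pos cnt acc = rum i v (pos + size u) cnt acc.
Proof.
elim: u pos => [|x u IH] pos /=; first by rewrite addn0.
case/andP=> /andP[/negbTE -> /negbTE ->] hu.
by rewrite IH // addnS.
Qed.

Lemma rum_open i k v pos cnt acc :
  rum i (nseq k i.+1 ++ v) pos cnt acc = rum i v (pos + k) (cnt + k) acc.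
Proof.
elim: k pos cnt => [|k IH] pos cnt /=; first by rewrite !addn0.
have -> : (i.+1 == i) = false by apply/eqP; lia.
rewrite eqxx IH; congr rum; lia.
Qed.

Lemma rum_close i k v pos cnt acc :
  rum i (nseq k i ++ v) pos cnt acc =
  rum i v (pos + k) (cnt - k) (if k <= cnt then acc else Some (pos + k).-1).
Proof.
elim: k pos cnt acc => [|k IH] pos cnt acc /=; first by rewrite !addn0 subn0.
rewrite eqxx; case: cnt => [|c].
  rewrite IH sub0n /=; case: k {IH} => [|k] /=; (congr (rum _ _ _ _ (Some _)); lia).
by rewrite IH subSS addnS addSn; congr rum.
Qed.

Lemma set_nth_cat (u v : seq nat) k y :
  set_nth 0 (u ++ v) (size u + k) y = u ++ set_nth 0 v k y.
Proof. by elim: u => //= x u ->. Qed.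

Lemma rum_close0 i k v pos cnt acc : cnt <= k ->
  rum i (nseq k i ++ i :: v) pos cnt acc = rum i v (pos + k).+1 0 (Some (pos + k)).
Proof.
move=> h; rewrite rum_close /= eqxx.
have -> : cnt - k = 0 by lia.
by [].
Qed.

Fixpoint rowsfrom (c : nat) (s : seq nat) : seq (seq nat) :=
  if s is r :: s' then nseq r c :: rowsfrom c.+1 s' else [::].

Definition Tb m1 m2 rest e f g : tableau :=
  (nseq m1 1 ++ [:: e]) :: (nseq m2 2 ++ [:: f; g]) :: rowsfrom 5 rest.

Definition RR rest := flatten (rev (rowsfrom 5 rest)).

Lemma rw_Tb m1 m2 rest e f g : reading_word (Tb m1 m2 rest e f g) =
  RR rest ++ (nseq m2 2 ++ [:: f; g]) ++ (nseq m1 1 ++ [:: e]).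
Proof.
by rewrite /reading_word /Tb !rev_cons -!cats1 !flatten_cat /= !cats0 -catA.
Qed.

Lemma rowsfrom_mem c s r x : r \in rowsfrom c s -> x \in r -> c <= x < c + size s.
Proof.
elim: s c => [|a s IH] c //=; rewrite inE => /orP[/eqP -> | hr] hx.
  by move: hx; rewrite mem_nseq => /andP[_ /eqP ->]; apply/andP; lia.
by have := IH _ hr hx => /andP[h1 h2]; apply/andP; lia.
Qed.

Lemma RR_mem rest x : x \in RR rest -> 5 <= x < 5 + size rest.
Proof.
by move=> /flattenP [r]; rewrite mem_rev => hr hx; apply: rowsfrom_mem hr hx.
Qed.

Lemma RR_skip i rest : i <= 3 -> all (fun x => (x != i) && (x != i.+1)) (RR rest).
Proof.
move=> hi; apply/allP => x /RR_mem /andP[h _]; apply/andP; split; apply/eqP; lia.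
Qed.

Lemma skip1 i k v pos cnt acc : i != 1 -> i.+1 != 1 ->
  rum i (nseq k 1 ++ v) pos cnt acc = rum i v (pos + k) cnt acc.
Proof.
move=> h1 h2; rewrite rum_skip ?size_nseq //.
by rewrite all_nseq; apply/orP; right; rewrite eq_sym h1 eq_sym h2.
Qed.

Lemma F3y m1 m2 rest :
  F_op 3 (Tb m1 m2 rest 2 2 3) = Some (Tb m1 m2 rest 2 2 4).
Proof.
apply: (F_op_char (p := size (RR rest ++ nseq m2 2 ++ [:: 2]) + 0)).
- rewrite rw_Tb rum_skip ?RR_skip // -catA rum_skip; last by rewrite all_nseq orbT.
  rewrite /= skip1 //=.
  by congr Some; rewrite !size_cat !size_nseq /=; lia.
- have E : forall g, RR rest ++ (nseq m2 2 ++ [:: 2;g]) ++ (nseq m1 1 ++ [:: 2]) = (RR rest ++ nseq m2 2 ++ [:: 2]) ++ g :: (nseq m1 1 ++ [:: 2]) by move=> g; rewrite !catA -!catA.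
  by rewrite !rw_Tb !E set_nth_cat.
- by rewrite /= !size_cat.
Qed.

Lemma F2x m1 m2 rest :
  F_op 2 (Tb m1 m2 rest 1 2 4) = Some (Tb m1 m2 rest 1 3 4).
Proof.
apply: (F_op_char (p := size (RR rest ++ nseq m2 2) + 0)).
- rewrite rw_Tb rum_skip ?RR_skip // -catA rum_close sub0n /= skip1 //=.
  by congr Some; rewrite !size_cat !size_nseq /=; lia.
- have E : forall f, RR rest ++ (nseq m2 2 ++ [:: f;4]) ++ (nseq m1 1 ++ [:: 1]) = (RR rest ++ nseq m2 2) ++ f :: 4 :: (nseq m1 1 ++ [:: 1]) by move=> f; rewrite !catA -!catA.
  by rewrite !rw_Tb !E set_nth_cat.
- by rewrite /= !size_cat.
Qed.

Lemma F1a m1 m2 rest : m2 <= m1 ->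
  F_op 1 (Tb m1 m2 rest 1 3 4) = Some (Tb m1 m2 rest 2 3 4).
Proof.
move=> h.
apply: (F_op_char (p := size (RR rest ++ (nseq m2 2 ++ [:: 3; 4]) ++ nseq m1 1) + 0)).
- rewrite rw_Tb rum_skip ?RR_skip // -catA rum_open /=.
  rewrite rum_close0 /=; last lia.
  by congr Some; rewrite !size_cat !size_nseq /=; lia.
- have E : forall e, RR rest ++ (nseq m2 2 ++ [:: 3;4]) ++ (nseq m1 1 ++ [:: e]) = (RR rest ++ (nseq m2 2 ++ [:: 3;4]) ++ nseq m1 1) ++ [:: e] by move=> e; rewrite !catA.
  by rewrite !rw_Tb !E set_nth_cat.
- by rewrite /= !size_cat.
Qed.

Lemma F2y m1 m2 rest :
  F_op 2 (Tb m1 m2 rest 2 2 3) = Some (Tb m1 m2 rest 2 3 3).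
Proof.
apply: (F_op_char (p := size (RR rest ++ nseq m2 2) + 0)).
- rewrite rw_Tb rum_skip ?RR_skip // -catA rum_close sub0n /= skip1 //=.
  by congr Some; rewrite !size_cat !size_nseq /=; lia.
- have E : forall f, RR rest ++ (nseq m2 2 ++ [:: f;3]) ++ (nseq m1 1 ++ [:: 2]) = (RR rest ++ nseq m2 2) ++ f :: 3 :: (nseq m1 1 ++ [:: 2]) by move=> f; rewrite !catA -!catA.
  by rewrite !rw_Tb !E set_nth_cat.
- by rewrite /= !size_cat.
Qed.

Lemma F3b m1 m2 rest :
  F_op 3 (Tb m1 m2 rest 2 3 3) = Some (Tb m1 m2 rest 2 3 4).
Proof.
apply: (F_op_char (p := size (RR rest ++ nseq m2 2 ++ [:: 3]) + 0)).
- rewrite rw_Tb rum_skip ?RR_skip // -catA rum_skip; last by rewrite all_nseq orbT.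
  rewrite /= skip1 //=.
  by congr Some; rewrite !size_cat !size_nseq /=; lia.
- have E : forall g, RR rest ++ (nseq m2 2 ++ [:: 3;g]) ++ (nseq m1 1 ++ [:: 2]) = (RR rest ++ nseq m2 2 ++ [:: 3]) ++ g :: (nseq m1 1 ++ [:: 2]) by move=> g; rewrite !catA -!catA.
  by rewrite !rw_Tb !E set_nth_cat.
- by rewrite /= !size_cat.
Qed.

Lemma rum2z1 m1 m2 rest :
  rum 2 (reading_word (Tb m1 m2 rest 2 2 4)) 0 0 None =
  Some (size (RR rest ++ (nseq m2 2 ++ [:: 2; 4]) ++ nseq m1 1)).
Proof.
rewrite rw_Tb rum_skip ?RR_skip // -catA rum_close sub0n /= skip1 //=.
by congr Some; rewrite !size_cat !size_nseq /=; lia.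
Qed.

Lemma nth_mid (u v : seq nat) a : nth 0 (u ++ a :: v) (size u) = a.
Proof. by rewrite nth_cat ltnn subnn. Qed.

Lemma z1_not_z2 m1 m2 rest i :
  F_op i (Tb m1 m2 rest 2 2 4) <> Some (Tb m1 m2 rest 2 3 4).
Proof.
move=> /F_op_inv [p [e hp hn hw]].
have E : forall f, reading_word (Tb m1 m2 rest 2 f 4) =
   (RR rest ++ nseq m2 2) ++ f :: 4 :: (nseq m1 1 ++ [:: 2]).
  by move=> f; rewrite rw_Tb !catA -!catA.
set pf := size (RR rest ++ nseq m2 2).
have H : nth 0 (reading_word (Tb m1 m2 rest 2 3 4)) pf =
   nth 0 (set_nth 0 (reading_word (Tb m1 m2 rest 2 2 4)) p i.+1) pf by rewrite hw.
move: H; rewrite nth_set_nth /= !E /pf !nth_mid -/pf.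
case: eqP => [hpf _|_] //. 
move: hn; rewrite -hpf E /pf nth_mid => hi; subst i.
move: e; rewrite rum2z1 -hpf => -[]; rewrite /pf !size_cat /=; lia.
Qed.

Lemma size_rowsfrom c s : map size (rowsfrom c s) = s.
Proof. by elim: s c => //= a s IH c; rewrite size_nseq IH. Qed.

Lemma nth_rowsfrom c s k : nth [::] (rowsfrom c s) k = nseq (nth 0 s k) (c + k).
Proof.
elim: s c k => [|a s IH] c [|k] //=; first by rewrite addn0.
by rewrite IH addSnnS.
Qed.

Lemma sorted_nseq_cat m c s : sorted leq s -> all (leq c) s -> sorted leq (nseq m c ++ s).
Proof.
move=> hs ha; elim: m => [|m IH] //=.
rewrite (path_sortedE leq_trans) IH andbT all_cat ha andbT all_nseq.
by apply/orP; right.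
Qed.

Lemma nth_le (s : seq nat) b j : all (fun x => x <= b) s -> nth 0 s j <= b.
Proof.
move=> /allP h; case: (ltnP j (size s)) => hj; first by apply: h; apply: mem_nth.
by rewrite nth_default.
Qed.

Lemma Tb_ssyt n l1 l2 rest e f g : 2 <= l2 <= l1 -> size rest + 2 < n ->
  1 <= e <= 2 -> 2 <= f <= g -> g <= 4 -> e < g ->
  is_SSYT n [:: l1, l2 & rest] (Tb l1.-1 (l2-2) rest e f g).
Proof.
move=> /andP[h2 h12] hn /andP[e1 e2] /andP[f2 fg] g4 eg.
apply/and4P; split.
- rewrite /Tb /= !size_cat !size_nseq size_rowsfrom /=.
  apply/eqP; congr [:: _, _ & _]; lia.
- rewrite /Tb /=; apply/and3P; split.
  + by apply: sorted_nseq_cat => //=; rewrite andbT.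
  + apply: sorted_nseq_cat => /=; first by rewrite fg.
    rewrite f2 /=; lia.
  + apply/allP => r /(nthP [::]) [k hk <-]; rewrite nth_rowsfrom.
    by rewrite -[nseq _ _]cats0 sorted_nseq_cat.
- rewrite /Tb /=; apply/and3P; split.
  + rewrite all_cat all_nseq /= andbT; apply/andP; split; first by rewrite orbT.
    apply/andP; lia.
  + rewrite all_cat all_nseq /= andbT; apply/andP; split; first by (apply/orP; right; lia).
    lia.
  + apply/allP => r hr; apply/allP => x hx.
    have := rowsfrom_mem hr hx; move=> /andP[h1 h3]; apply/andP; lia.
- apply/allP => k; rewrite mem_iota add0n => /andP[_ hk].
  apply/allP => j; rewrite mem_iota add0n => /andP[_ hj].
  case: k hk hj => [|[|k]] hk hj.
  + move: hj; rewrite /= !nth_cat !size_nseq !nth_nseq size_cat size_nseq /= => hj.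
    case: (ltnP j l1.-1) => hj1.
      case: (ltnP j (l2-2)) => hj2 //.
      by case E: (j - (l2 - 2)) => [|[|]] /=; lia.
    have -> : j - l1.-1 = 0 by lia.
    have -> : j - (l2 - 2) = 1 by lia.
    have -> : j < l2 - 2 = false by apply/negbTE; rewrite -leqNgt; lia.
    by [].
  + rewrite /= nth_rowsfrom nth_nseq.
    move: hj; rewrite /= nth_rowsfrom size_nseq => ->.
    apply: (@leq_ltn_trans 4); last by [].
    apply: nth_le; rewrite all_cat all_nseq /= andbT; apply/andP; split; first by (apply/orP; right; lia).
    by apply/andP; split => //; lia.
  + move: hj; rewrite /= !nth_rowsfrom size_nseq !nth_nseq => ->.
    by case: ifP => //; lia.
Qed.

Lemma F1x m1 m2 rest : m2 < m1 ->
  F_op 1 (Tb m1 m2 rest 1 2 4) = Some (Tb m1 m2 rest 2 2 4).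
Proof.
move=> h.
apply: (F_op_char (p := size (RR rest ++ (nseq m2 2 ++ [:: 2; 4]) ++ nseq m1 1) + 0)).
- rewrite rw_Tb rum_skip ?RR_skip // -catA rum_open /=.
  rewrite rum_close0 /=; last lia.
  by congr Some; rewrite !size_cat !size_nseq /=; lia.
- have E : forall e, RR rest ++ (nseq m2 2 ++ [:: 2;4]) ++ (nseq m1 1 ++ [:: e]) = (RR rest ++ (nseq m2 2 ++ [:: 2;4]) ++ nseq m1 1) ++ [:: e] by move=> e; rewrite !catA.
  by rewrite !rw_Tb !E set_nth_cat.
- by rewrite /= !size_cat.
Qed.

Lemma cle1 N t t' i : 1 <= i <= N -> F_op i t = Some t' -> crystal_le N t t'.
Proof. by move=> hi hF; apply: crystal_le_step (crystal_le_refl _ _) hi hF. Qed.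

Lemma cle2 N t t' t'' i k : 1 <= i <= N -> F_op i t = Some t' ->
  1 <= k <= N -> F_op k t' = Some t'' -> crystal_le N t t''.
Proof. by move=> hi hF hk hF'; apply: crystal_le_step (cle1 hi hF) hk hF'. Qed.

Theorem lemma5p8 (n : nat) (lam : seq nat) :
  is_partition lam -> 2 <= size lam -> size lam < n -> 2 <= nth 0 lam 1 ->
  ~ B_is_lattice n lam.
Proof.
case: lam => [|l1 [|l2 rest]] //= hpart _ hn h2 hlat.
have h12 : l2 <= l1 by move: hpart => /andP[/= /andP[]].
have hn' : size rest + 2 < n by lia.
have hl : 2 <= l2 <= l1 by apply/andP.
have sx := Tb_ssyt (e:=1) (f:=2) (g:=4) hl hn' erefl erefl erefl erefl.
have sy := Tb_ssyt (e:=2) (f:=2) (g:=3) hl hn' erefl erefl erefl erefl.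
have sz1 := Tb_ssyt (e:=2) (f:=2) (g:=4) hl hn' erefl erefl erefl erefl.
have sz2 := Tb_ssyt (e:=2) (f:=3) (g:=4) hl hn' erefl erefl erefl erefl.
have hm : l2 - 2 < l1.-1 by lia.
have i1 : 1 <= 1 <= n by apply/andP; lia.
have i2 : 1 <= 2 <= n by apply/andP; lia.
have i3 : 1 <= 3 <= n by apply/andP; lia.
have Fxz1 := F1x rest hm.
have Fyz1 := F3y l1.-1 (l2-2) rest.
have Fxa := F2x l1.-1 (l2-2) rest.
have Faz2 := F1a rest (ltnW hm).
have Fyb := F2y l1.-1 (l2-2) rest.
have Fbz2 := F3b l1.-1 (l2-2) rest.
have [[j [sj xj yj jmin]] _] := hlat _ _ sx sy.
have jz1 := jmin _ sz1 (cle1 i1 Fxz1) (cle1 i3 Fyz1).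
have jz2 := jmin _ sz2 (cle2 i2 Fxa i1 Faz2) (cle2 i2 Fyb i3 Fbz2).
have wz1x := F_wt Fxz1; have wz1y := F_wt Fyz1.
have wax := F_wt Fxa; have wz2a := F_wt Faz2.
case: (cle_wt jz1) => [ej|lt1].
  move: jz2; rewrite ej => /cle_step.
  rewrite wz2a wax wz1x => /(_ erefl) [i hi].
  exact: z1_not_z2 hi.
case: (cle_wt xj) => [ej|lt2]. 2: { move: lt1 lt2 wz1x. lia. }
move: yj; rewrite -ej => /cle_wt [exy|lt3]. 2: { move: lt3 wz1x wz1y. lia. }
by move: exy => /(congr1 (fun t => last 0 (nth [::] t 1))); rewrite /= !last_cat.
Qed.
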